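(* Let $F$ be a saturated minimally unsatisfiable clause-set. Then singular DP-reduction is confluent on $F$, i.e., $|\mathrm{sDP}(F)| = 1$. In other words, the class of saturated minimally unsatisfiable clause-sets is contained in the class of $F \in \mathrm{MU}$ with $|\mathrm{sDP}(F)|=1$.
   Context: Literals are variables $v$ and their complements $\overline{v}$. A clause is a finite set of literals containing no complementary pair; a clause-set is a finite set of clauses. $\mathrm{var}(F)$ is the set of variables occurring in $F$. For a literal $x$, $\mathrm{ldeg}_F(x)$ is the number of clauses of $F$ containing $x$. For a variable $v$, the DP-reduction is $\mathrm{DP}_v(F) := \{C \in F : v \notin \mathrm{var}(C)\} \cup \{(C \cup D)\setminus\{v,\overline{v}\} : C, D \in F,\ C \cap \overline{D} = \{v\}\}$ (where $\overline{D}=\{\overline{y}: y\in D\}$). $\mathrm{MU}$ is the set of minimally unsatisfiable clause-sets (unsatisfiable, but every proper subset is satisfiable). $F \in \mathrm{MU}$ is saturated if for every $C \in F$ and every literal $x$ with $\mathrm{var}(x) \in \mathrm{var}(F)\setminus \mathrm{var}(C)$, the clause-set $(F\setminus\{C\})\cup\{C\cup\{x\}\}$ is satisfiable. A variable $v$ is singular for $F$ if $\min(\mathrm{ldeg}_F(v),\mathrm{ldeg}_F(\overline{v}))=1$; $F$ is nonsingular if it has no singular variable. A singular DP-reduction step is $F \leadsto \mathrm{DP}_v(F)$ for $F\in \mathrm{MU}$ and $v$ singular for $F$ (the result is again in $\mathrm{MU}$). $\mathrm{sDP}(F)$ is the set of nonsingular $F' \in \mathrm{MU}$ obtainable from $F$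 by zero or more singular DP-reduction steps. *)

(* Defs.v *)
From mathcomp Require Import all_boot.
Set Implicit Arguments. Unset Strict Implicit. Unset Printing Implicit Defensive.

Section Clauses.
Variable V : finType.

(* A literal is a pair (sign, variable): (true, v) is v, (false, v) is ~v. *)
Definition lit := (bool * V)%type.
Definition clause := {set lit}.
Definition clauseset := {set clause}.

Definition compl (x : lit) : lit := (~~ x.1, x.2).
Definition posl (v : V) : lit := (true, v).
Definition negl (v : V) : lit := (false, v).

Definition clause_ok (C : clause) : bool := [forall x in C, compl x \notin C].
Definition cls_ok (F : clauseset) : bool := [forall C in F, clause_ok C].

Definition varC (C : clause) : {set V} := [set x.2 | x in C].
Definition var (F : clauseset) : {set V} := \bigcup_(C in F) varC C.

Definition ldeg (F : clauseset) (x : lit) : nat := #|[set C in F | x \in C]|.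

Definition complC (D : clause) : clause := [set compl y | y in D].

Definition DP (v : V) (F : clauseset) : clauseset :=
  [set C in F | v \notin varC C] :|:
  [set (C :|: D) :\: [set posl v; negl v]
     | C in F, D in F & C :&: complC D == [set posl v]].

Definition satisfies (f : {ffun V -> bool}) (F : clauseset) : bool :=
  [forall C in F, [exists x in C, f x.2 == x.1]].
Definition sat (F : clauseset) : bool := [exists f, satisfies f F].

Definition MU (F : clauseset) : bool :=
  [&& cls_ok F, ~~ sat F & [forall G : clauseset, (G \proper F) ==> sat G]].

Definition saturated (F : clauseset) : bool :=
  MU F &&
  [forall C in F, forall x : lit,
     ((x.2 \in var F) && (x.2 \notin varC C)) ==>
       sat ((F :\ C) :|: [set C :|: [set x]])].

Definition singular (F : clauseset) (v : V) : bool :=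
  minn (ldeg F (posl v)) (ldeg F (negl v)) == 1.

Definition nonsingular (F : clauseset) : bool := [forall v, ~~ singular F v].

Definition sDP_step : rel clauseset :=
  fun F G => MU F && [exists v, singular F v && (G == DP v F)].

Definition sDP (F : clauseset) : {set clauseset} :=
  [set G | [&& connect sDP_step F G, nonsingular G & MU G]].

End Clauses.

(* Main.v *)
Require Import Defs.
From mathcomp Require Import all_boot zify.
Set Implicit Arguments. Unset Strict Implicit. Unset Printing Implicit Defensive.

Section S.
Variable V : finType.
Implicit Types (F G : clauseset V) (C D E : clause V) (x y w z : lit V).

Definition lsat (f : {ffun V -> bool}) (w : lit V) := f w.2 == w.1.
Definition satC f C := [exists w in C, lsat f w].
Definition flip (f : {ffun V -> bool}) (v : V) (b : bool) : {ffun V -> bool} :=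
  [ffun u => if u == v then b else f u].

Lemma complK x : compl (compl x) = x.
Proof. by case: x => [[] u]. Qed.
Lemma compl2 x : (compl x).2 = x.2. Proof. by []. Qed.
Lemma compl_neq x : compl x != x.
Proof. by case: x => [[] u]. Qed.
Lemma var_eq w x : w.2 = x.2 -> w = x \/ w = compl x.
Proof. by case: w x => [b u] [c u'] /= ->; case: b; case: c; auto. Qed.

Lemma flip_other f v b w : w.2 != v -> lsat (flip f v b) w = lsat f w.
Proof. by rewrite /lsat ffunE => /negPf ->. Qed.
Lemma flip_same f b w : lsat (flip f w.2 b) w = (b == w.1).
Proof. by rewrite /lsat ffunE eqxx. Qed.

Lemma satisfiesP f F : reflect (forall C, C \in F -> satC f C) (satisfies f F).
Proof. exact: forall_inP. Qed.
Lemma satCP f C : reflect (exists2 w, w \in C & lsat f w) (satC f C).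
Proof. exact: exists_inP. Qed.

Lemma satC_sub f C D : C \subset D -> satC f C -> satC f D.
Proof. move=> /subsetP sCD /satCP [w /sCD wD h]; apply/satCP; by exists w. Qed.

Lemma sat_sub F G : G \subset F -> sat F -> sat G.
Proof.
move=> /subsetP sGF /existsP [f /satisfiesP h]; apply/existsP; exists f.
apply/satisfiesP => C /sGF; exact: h.
Qed.

Lemma MUP F : MU F -> [/\ cls_ok F, ~~ sat F & forall G, G \proper F -> sat G].
Proof. by case/and3P => a b /forallP c; split => // G; move: (c G) => /implyP. Qed.

Lemma MU_del F C : MU F -> C \in F -> sat (F :\ C).
Proof. case/MUP => _ _ h CF; apply: h; by rewrite properD1. Qed.

Lemma clause_okP C x : clause_ok C -> x \in C -> compl x \notin C.
Proof. by move=> /forall_inP h; apply: h. Qed.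

Lemma cls_okP F C : cls_ok F -> C \in F -> clause_ok C.
Proof. by move=> /forall_inP h; apply: h. Qed.

Lemma in_varC C u : (u \in varC C) = [exists w in C, w.2 == u].
Proof.
apply/imsetP/exists_inP => [[w wC ->]|[w wC /eqP <-]]; by exists w.
Qed.

Lemma in_var F u : (u \in var F) = [exists C in F, u \in varC C].
Proof. apply/bigcupP/exists_inP => [[C CF h]|[C CF h]]; by exists C. Qed.


Lemma lsat_compl f w : lsat f (compl w) = ~~ lsat f w.
Proof. by case: w => [[] u]; rewrite /lsat /=; case: (f u). Qed.

Lemma flip_keep f x b C : satC f C -> x \notin C -> compl x \notin C ->
  satC (flip f x.2 b) C.
Proof.
move=> /satCP [w wC h] xC cxC; apply/satCP; exists w => //.
rewrite flip_other // ; apply/eqP => /var_eq [] ew; subst w.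
  by rewrite wC in xC. by rewrite wC in cxC.
Qed.

Lemma flip_hit f x C : x \in C -> satC (flip f x.2 x.1) C.
Proof. move=> xC; apply/satCP; exists x => //; by rewrite flip_same. Qed.

Lemma satisfies_del f F D : satisfies f (F :\ D) -> satC f D -> satisfies f F.
Proof.
move=> /satisfiesP h hD; apply/satisfiesP => C CF.
case: (eqVneq C D) => [->//|ne]; apply: h; by rewrite in_setD1 ne.
Qed.

Lemma not_sat F f : ~~ sat F -> satisfies f F -> False.
Proof. by move=> /existsPn /(_ f) /negP. Qed.

Lemma clause_ok_sub C D : C \subset D -> clause_ok D -> clause_ok C.
Proof.
move=> /subsetP s /forall_inP h; apply/forall_inP => w wC.
apply/negP => /s cD; move: (h w (s w wC)); by rewrite cD.
Qed.

Lemma var_in F C w : C \in F -> w \in C -> w.2 \in var F.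
Proof. move=> CF wC; rewrite in_var; apply/exists_inP; exists C => //.
rewrite in_varC; apply/exists_inP; by exists w. Qed.

Lemma ldeg0 F x : ldeg F x = 0 -> forall C, C \in F -> x \notin C.
Proof.
move=> /cards0_eq h C CF; apply/negP => xC.
have : C \in [set C in F | x \in C] by rewrite inE CF xC.
by rewrite h inE.
Qed.

Lemma MU_pure F x : MU F -> x.2 \in var F -> 0 < ldeg F x.
Proof.
move=> mu; rewrite in_var => /exists_inP [E EF]; rewrite in_varC.
move=> /exists_inP [w wE /eqP /var_eq hw].
rewrite lt0n; apply/negP => /eqP h0; have h := ldeg0 h0.
have cxE : compl x \in E by case: hw => ?; subst w => //; move: (h E EF); rewrite wE.
case/MUP: (mu) => _ uns _.
case/existsP: (MU_del mu EF) => f hf.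
apply: (not_sat uns (f := flip f (compl x).2 (compl x).1)).
apply/satisfiesP => D DF.
case cxD: (compl x \in D); first exact: flip_hit.
rewrite compl2; apply: flip_keep; last by rewrite cxD.
  apply: (forall_inP hf); rewrite in_setD1 DF andbT; apply/eqP => eDE.
  by rewrite eDE cxE in cxD.
exact: h.
Qed.


Definition asg x F := [set D :\ compl x | D in F & x \notin D].

Lemma asgP x F E : reflect (exists2 D, D \in F /\ x \notin D & E = D :\ compl x) (E \in asg x F).
Proof.
apply: (iffP imsetP) => [[D] | [D [DF xD] ->]].
  by rewrite inE => /andP [DF xD] ->; exists D.
by exists D => //; rewrite inE DF.
Qed.

Lemma sat_Fsat F f : satisfies f F -> sat F.
Proof. by move=> h; apply/existsP; exists f. Qed.

Section Sing.
Variables (F : clauseset V) (x : lit V) (C : clause V).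
Hypotheses (satF : saturated F) (CF : C \in F) (xC : x \in C)
  (uC : forall D, D \in F -> x \in D -> D = C).

Let muF : MU F. Proof. by case/andP: satF. Qed.
Let okF : cls_ok F. Proof. by case/MUP: muF. Qed.
Let unsF : ~~ sat F. Proof. by case/MUP: muF. Qed.
Let cxC : compl x \notin C.
Proof. exact: clause_okP (cls_okP okF CF) xC. Qed.

Let satur D z : D \in F -> z.2 \in var F -> z.2 \notin varC D ->
  sat ((F :\ D) :|: [set D :|: [set z]]).
Proof.
case/andP: satF => _ /forall_inP h DF z1 z2.
by move: (h D DF) => /forallP /(_ z) /implyP; apply; rewrite z1 z2.
Qed.

Lemma Sub D z : D \in F -> compl x \in D -> z \in C -> z != x -> z \in D.
Proof.
move=> DF cxD zC zx; apply/negPn/negP => zD.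
have [g hg lz] : exists2 g, satisfies g (F :\ D) & lsat g z.
  case cz: (compl z \in D).
    case/existsP: (MU_del muF DF) => g hg; exists g => //.
    apply/negPn/negP => nl; apply: (not_sat unsF (satisfies_del hg _)).
    by apply/satCP; exists (compl z) => //; rewrite lsat_compl.
  have: z.2 \notin varC D.
    rewrite in_varC; apply/exists_inP => [[w wD /eqP /var_eq [] ew]]; subst w.
      by rewrite wD in zD. by rewrite wD in cz.
  move=> /(satur DF (var_in CF zC)) /existsP [g /satisfiesP hg].
  exists g.
    apply/satisfiesP => E EE; apply: hg; by rewrite inE EE.
  have : satC g (D :|: [set z]) by apply: hg; rewrite !inE eqxx orbT.
  case/satCP => w; rewrite inE => /orP [wD lw|]; last by rewrite inE => /eqP ->.
  exfalso; apply: (not_sat unsF (f := g)); apply: (satisfies_del (D := D)).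
    apply/satisfiesP => E EE; apply: hg; by rewrite inE EE.
  by apply/satCP; exists w.
apply: (not_sat unsF (f := flip g x.2 (compl x).1)).
apply/satisfiesP => E EF.
case cxE: (compl x \in E); first by rewrite -compl2 flip_hit.
case xE: (x \in E).
  rewrite (uC EF xE); apply/satCP; exists z => //; rewrite flip_other //.
  apply/eqP => /var_eq [] ez; subst z; first by rewrite eqxx in zx.
  by move: cxC; rewrite zC.
apply: flip_keep; rewrite ?xE ?cxE //.
apply: (forall_inP hg); rewrite in_setD1 EF andbT; apply/eqP => eED.
by rewrite eED cxD in cxE.
Qed.

Lemma transfer f E : satC f C -> (compl x \in E -> forall z, z \in C -> z != x -> z \in E) ->
  satC f E -> satC f (E :\ compl x).
Proof.
move=> sC hE /satCP [w wE lw].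
case: (eqVneq w (compl x)) => [ewx|ne]; last first.
  by apply/satCP; exists w; rewrite // in_setD1 ne.
subst w; case/satCP: sC => w' w'C lw'.
have ne : w' != x by apply/eqP => e; subst w'; rewrite lsat_compl lw' in lw.
apply/satCP; exists w' => //; rewrite in_setD1 (hE wE w' w'C ne) andbT.
by apply/eqP => e; subst w'; move: cxC; rewrite w'C.
Qed.

Let SubF E : E \in F -> compl x \in E -> forall z, z \in C -> z != x -> z \in E.
Proof. move=> EF cxE z zC zx; exact: Sub EF cxE zC zx. Qed.

Lemma asg_ok : cls_ok (asg x F).
Proof.
apply/forall_inP => E' /asgP [E [EF _] ->].
apply: (clause_ok_sub (D := E)); first exact: subD1set.
exact: cls_okP okF EF.
Qed.

Lemma asg_unsat : ~~ sat (asg x F).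
Proof.
apply/negP => /existsP [g /satisfiesP hg].
apply: (not_sat unsF (f := flip g x.2 x.1)); apply/satisfiesP => E EF.
case xE: (x \in E); first exact: flip_hit.
have : satC g (E :\ compl x) by apply: hg; apply/asgP; exists E; rewrite ?xE.
move=> h; apply: (satC_sub (C := E :\ compl x)); first exact: subD1set.
apply: flip_keep => //; rewrite in_setD1 ?eqxx //= xE andbF //.
Qed.

Let satC_C f E : satisfies f (F :\ E) -> x \notin E -> satC f C.
Proof.
move=> /satisfiesP h xE; apply: h; rewrite in_setD1 CF andbT.
by apply/eqP => e; subst E; rewrite xC in xE.
Qed.

Let others f E E2' : satisfies f (F :\ E) -> x \notin E -> E2' \in asg x F ->
  E2' != E :\ compl x -> satC f E2'.
Proof.
move=> hf xE /asgP [E2 [E2F xE2] ->] ne.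
apply: transfer; first exact: satC_C hf xE.
  exact: SubF E2F.
apply: (forall_inP hf); rewrite in_setD1 E2F andbT.
by apply/eqP => e; subst E2; rewrite eqxx in ne.
Qed.

Lemma asg_MU : MU (asg x F).
Proof.
apply/and3P; split; [exact: asg_ok | exact: asg_unsat |].
apply/forallP => G'; apply/implyP => /properP [sG [E' E'a E'G]].
apply: (sat_sub (F := asg x F :\ E')).
  apply/subsetP => K KG; rewrite in_setD1 (subsetP sG _ KG) andbT.
  by apply/eqP => e; subst K; rewrite KG in E'G.
case/asgP: E'a => E [EF xE] ->.
case/existsP: (MU_del muF EF) => f hf.
apply: (sat_Fsat (f := f)); apply/satisfiesP => K; rewrite in_setD1 => /andP [ne Ka].
exact: others hf xE Ka ne.
Qed.

Lemma asg_var u : u \in var (asg x F) -> u != x.2.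
Proof.
rewrite in_var => /exists_inP [E' /asgP [E [EF xE] ->]].
rewrite in_varC => /exists_inP [w]; rewrite in_setD1 => /andP [ne wE] /eqP <-.
apply/eqP => /var_eq [] e; subst w; first by rewrite wE in xE.
by rewrite eqxx in ne.
Qed.

Lemma asg_var_sub u : u \in var (asg x F) -> u \in var F.
Proof.
rewrite in_var => /exists_inP [E' /asgP [E [EF xE] ->]].
rewrite in_varC => /exists_inP [w]; rewrite in_setD1 => /andP [ne wE] /eqP <-.
exact: var_in EF wE.
Qed.

Lemma asg_saturated : saturated (asg x F).
Proof.
apply/andP; split; first exact: asg_MU.
apply/forall_inP => E' E'a; apply/forallP => z; apply/implyP => /andP [zv zE'].
have zx := asg_var zv.
case/asgP: E'a zE' => E [EF xE] -> zE'.
have zE : z.2 \notin varC E.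
  apply/negP; rewrite in_varC => /exists_inP [w wE /eqP wz].
  move/negP: zE'; apply; rewrite in_varC; apply/exists_inP; exists w; last by rewrite wz.
  rewrite in_setD1 wE andbT; apply/eqP => e; subst w.
  by move: zx; rewrite -wz /= eqxx.
case/existsP: (satur EF (asg_var_sub zv) zE) => f /satisfiesP hf.
have hf' : satisfies f (F :\ E) by apply/satisfiesP => K KF; apply: hf; rewrite inE KF.
apply: (sat_Fsat (f := f)); apply/satisfiesP => K; rewrite !inE => /orP [/andP [ne Ka]|/eqP ->].
  exact: others hf' xE Ka ne.
apply: (satC_sub (C := (E :|: [set z]) :\ compl x)).
  apply/subsetP => w; rewrite !inE => /andP [-> /orP [->|->]] //; by rewrite orbT.
apply: transfer; first exact: satC_C hf' xE.
  rewrite !inE => /orP [cxE|/eqP e] w wC wx.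
    by rewrite inE (SubF EF cxE wC wx).
  by move: zx; rewrite -e eqxx.
by apply: hf; rewrite !inE eqxx orbT.
Qed.

Lemma in_complC w D : (w \in complC D) = (compl w \in D).
Proof.
apply/imsetP/idP => [[y yD ->]|h]; first by rewrite complK.
by exists (compl w); rewrite ?complK.
Qed.

Lemma setD1_id (A : clause V) w : w \notin A -> A :\ w = A.
Proof. move=> h; apply/setP => y; rewrite in_setD1; case: (eqVneq y w) => // ->; by rewrite (negPf h). Qed.

Let clash_in E w : E \in F -> w \in E -> compl w \in E -> False.
Proof. move=> EF wE; apply/negP; exact: clause_okP (cls_okP okF EF) wE. Qed.

Lemma res_eq E : E \in F -> compl x \in E -> x \notin E ->
  (C :|: E) :\: [set x; compl x] = E :\ compl x.
Proof.
move=> EF cxE xE; apply/setP => w; rewrite !inE negb_or.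
case: (eqVneq w x) => [->|wx]; first by rewrite (negPf xE) /= !andbF.
case: (eqVneq w (compl x)) => //= _.
by case wC: (w \in C) => //=; rewrite (SubF EF cxE wC wx).
Qed.

Lemma res_clash1 E : E \in F -> compl x \in E -> C :&: complC E = [set x].
Proof.
move=> EF cxE; apply/setP => w; rewrite !inE in_complC.
case: (eqVneq w x) => [->|wx]; first by rewrite xC cxE.
case wC: (w \in C) => //=; apply/negP => cwE.
exact: clash_in EF (SubF EF cxE wC wx) cwE.
Qed.

Lemma res_clash2 E : E \in F -> compl x \in E -> E :&: complC C = [set compl x].
Proof.
move=> EF cxE; apply/setP => w; rewrite !inE in_complC.
case: (eqVneq w (compl x)) => [->|wx]; first by rewrite complK xC cxE.
case wE: (w \in E) => //=; apply/negP => cwC.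
have cwx : compl w != x by apply: contra wx => /eqP <-; rewrite complK.
exact: clash_in EF wE (SubF EF cxE cwC cwx).
Qed.

Lemma pn_set : [set posl x.2; negl x.2] = [set x; compl x].
Proof. case: x => [[] u] //=; by rewrite setUC. Qed.

Lemma DP_asg : DP x.2 F = asg x F.
Proof.
rewrite /DP pn_set; apply/setP => K; apply/idP/idP.
  rewrite inE => /orP [|].
    rewrite inE => /andP [KF Kv]; apply/asgP; exists K; last first.
      rewrite setD1_id //; apply: contra Kv => h; rewrite in_varC; apply/exists_inP.
      by exists (compl x).
    split => //; apply: contra Kv => h; rewrite in_varC; apply/exists_inP; by exists x.
  case/imset2P => C1 D1 C1F; rewrite inE => /andP [D1F /eqP cl] ->.
  have : posl x.2 \in C1 :&: complC D1 by rewrite cl inE.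
  rewrite inE in_complC /= => /andP [pC1 pD1].
  have [[hp hn]|[hp hn]] : (posl x.2 = x /\ negl x.2 = compl x) \/ (posl x.2 = compl x /\ negl x.2 = x).
    by case: (x) => [[] u]; [left|right].
    rewrite hp in pC1 pD1.
    rewrite (uC C1F pC1) res_eq //; last by apply/negP => h; exact: clash_in D1F h pD1.
    apply/asgP; exists D1 => //; split=> //; by apply/negP => h; exact: clash_in D1F h pD1.
  rewrite hp complK in pC1 pD1.
  rewrite (uC D1F pD1) setUC res_eq //; last by apply/negP => h; apply: (clash_in C1F pC1); rewrite complK.
  apply/asgP; exists C1 => //; split=> //; by apply/negP => h; apply: (clash_in C1F pC1); rewrite complK.
case/asgP => E [EF xE] ->; rewrite inE.
case cxE: (compl x \in E); last first.
  rewrite setD1_id ?cxE // inE EF /= in_varC; apply/orP; left; apply/negP => /exists_inP [w wE /eqP /var_eq [] e]; subst w.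
    by rewrite wE in xE. by rewrite wE in cxE.
apply/orP; right; apply/imset2P.
have [[hp hn]|[hp hn]] : (posl x.2 = x /\ negl x.2 = compl x) \/ (posl x.2 = compl x /\ negl x.2 = x).
  by case: (x) => [[] u]; [left|right].
  apply: (@Imset2spec _ _ _ _ _ _ _ C E) => //.
    by rewrite inE EF /= res_clash1 // hp eqxx.
  by symmetry; exact: res_eq.
apply: (@Imset2spec _ _ _ _ _ _ _ E C) => //.
  by rewrite inE CF /= res_clash2 // hp eqxx.
by rewrite setUC; symmetry; exact: res_eq.
Qed.

Lemma asg_card : #|asg x F| < #|F|.
Proof.
apply: (leq_ltn_trans (leq_imset_card _ _)); apply: proper_card.
apply/properP; split; first by apply/subsetP => D; rewrite inE => /andP [].
by exists C => //; rewrite inE xC andbF.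
Qed.

End Sing.


Lemma ldeg_asg x y F : y.2 != x.2 -> ldeg (asg x F) y <= ldeg F y.
Proof.
move=> yx; rewrite /ldeg.
apply: (leq_trans _ (leq_imset_card (fun D => D :\ compl x) _)).
apply: subset_leq_card; apply/subsetP => K; rewrite inE => /andP [/asgP [D [DF xD] ->] yK].
apply/imsetP; exists D => //; rewrite inE DF; by move: yK; rewrite in_setD1 => /andP [].
Qed.

Lemma asg_comm_sub x y F : x.2 != y.2 -> asg y (asg x F) \subset asg x (asg y F).
Proof.
move=> xy; apply/subsetP => K /asgP [K1 [/asgP [D [DF xD] ->] yK1] ->].
have ycx : y != compl x by apply: contra xy => /eqP ->.
have yD : y \notin D by move: yK1; rewrite in_setD1 ycx.
have xcy : x != compl y by apply: contra xy => /eqP ->.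
apply/asgP; exists (D :\ compl y); last by rewrite setDDl setUC -setDDl.
split; last by rewrite in_setD1 xcy.
by apply/asgP; exists D.
Qed.

Lemma asg_comm x y F : x.2 != y.2 -> asg y (asg x F) = asg x (asg y F).
Proof.
move=> xy; apply/eqP; rewrite eqEsubset asg_comm_sub //= asg_comm_sub //.
by rewrite eq_sym.
Qed.

Lemma asg_novar y G : y.2 \notin var G -> asg y G = G.
Proof.
move=> yv; apply/setP => K; apply/asgP/idP => [[D [DG yD] ->]|KG].
  rewrite setD1_id //; apply: contra yv => h; exact: var_in DG h.
exists K; last by rewrite setD1_id //; apply: contra yv => h; exact: var_in KG h.
split => //; apply: contra yv => h; exact: var_in KG h.
Qed.

Lemma ldeg1P F x : ldeg F x = 1 ->
  exists C, [/\ C \in F, x \in C & forall D, D \in F -> x \in D -> D = C].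
Proof.
move=> /eqP h1; case: (cards1P h1) => C hC; exists C.
have : C \in [set C in F | x \in C] by rewrite hC inE.
rewrite inE => /andP [CF xC]; split => // D DF xD.
have : D \in [set C in F | x \in C] by rewrite inE DF xD.
by rewrite hC inE => /eqP.
Qed.

Lemma sing_step F x : saturated F -> ldeg F x = 1 ->
  [/\ sDP_step F (asg x F), saturated (asg x F) & #|asg x F| < #|F|].
Proof.
move=> sF h1; case: (ldeg1P h1) => C [CF xC uC].
split; [|exact: asg_saturated sF CF xC uC | exact: asg_card CF xC].
apply/andP; split; first by case/andP: sF.
apply/existsP; exists x.2; rewrite -(DP_asg sF CF xC uC) eqxx andbT.
have : 0 < ldeg F (compl x).
  apply: MU_pure; first by case/andP: sF.
  by rewrite compl2; exact: var_in CF xC.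
rewrite /singular; case: (x) h1 => [[] u] /= h1.
  by rewrite /posl /negl h1 /compl /= => h; apply/eqP; lia.
by rewrite /posl /negl h1 /compl /= => h; apply/eqP; lia.
Qed.

Lemma le1_step F x : saturated F -> ldeg F x <= 1 ->
  [/\ connect (@sDP_step V) F (asg x F), saturated (asg x F) & #|asg x F| <= #|F|].
Proof.
move=> sF h.
case vx: (x.2 \in var F); last first.
  by rewrite asg_novar ?vx.
have : 0 < ldeg F x by apply: MU_pure => //; case/andP: sF.
move=> hp; have h1 : ldeg F x = 1 by apply/eqP; rewrite eqn_leq h hp.
case: (sing_step sF h1) => st s c; split => //; last exact: ltnW.
exact: connect1.
Qed.

Lemma singP F v : singular F v -> exists x, x.2 = v /\ ldeg F x = 1.
Proof.
rewrite /singular => /eqP e.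
case: (leqP (ldeg F (posl v)) (ldeg F (negl v))) => h.
  by exists (posl v); split => //; lia.
by exists (negl v); split => //; lia.
Qed.


Lemma conn_sDP F G : connect (@sDP_step V) F G -> sDP G \subset sDP F.
Proof.
move=> c; apply/subsetP => H; rewrite !inE => /and3P [c2 -> ->].
by rewrite (connect_trans c c2).
Qed.

Lemma step_inv F G : sDP_step F G -> saturated F -> exists x, ldeg F x = 1 /\ G = asg x F.
Proof.
case/andP => _ /existsP [v /andP [sv /eqP ->]] sF.
case: (singP sv) => x [<- h1]; exists x; split => //.
case: (ldeg1P h1) => C [CF xC uC]; exact: DP_asg sF CF xC uC.
Qed.

Lemma connect_dec F H : connect (@sDP_step V) F H ->
  F = H \/ exists G, sDP_step F G /\ connect (@sDP_step V) G H.
Proof.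
case/connectP => [[|G p]] /= => [_ ->|/andP [st pa] ->]; first by left.
by right; exists G; split => //; apply/connectP; exists p.
Qed.

Lemma nonsing_nostep F G : nonsingular F -> ~~ sDP_step F G.
Proof.
move=> /forallP ns; apply/negP => /andP [_ /existsP [v /andP [sv _]]].
by move: (ns v); rewrite sv.
Qed.

Lemma in_sDP1 (S : {set clauseset V}) N : S = [set N] -> N \in S.
Proof. by move=> ->; rewrite inE. Qed.

Lemma main n F : #|F| <= n -> saturated F -> exists N, sDP F = [set N].
Proof.
elim: n F => [|n IH] F hn sF.
  exfalso; case/andP: sF => /MUP [_ uns _] _; move: hn; rewrite leqn0 => /eqP /cards0_eq e.
  by move/negP: uns; apply; apply/existsP; exists [ffun => true]; rewrite e; apply/forall_inP => C; rewrite inE.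
have muF : MU F by case/andP: sF.
case nsF: (nonsingular F).
  exists F; apply/setP => H; rewrite !inE; apply/idP/idP.
    case/and3P => /connect_dec [->//|[G [st _]]]; by rewrite (negPf (nonsing_nostep G nsF)) in st.
  by move/eqP => ->; rewrite connect0 nsF muF.
have [x h1] : exists x, ldeg F x = 1.
  move/negbT: nsF => /forallPn [v /negPn sv]; case: (singP sv) => x [_ h]; by exists x.
case: (sing_step sF h1) => stx sx cx.
case: (IH (asg x F)) => // [|N hN]; first by rewrite -ltnS (leq_trans cx).
have K : forall y, ldeg F y = 1 -> sDP (asg y F) = [set N].
  move=> y h1y; case: (sing_step sF h1y) => sty sy cy.
  case: (IH (asg y F)) => // [|N2 hN2]; first by rewrite -ltnS (leq_trans cy).
  rewrite hN2; congr [set _].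
  case: (eqVneq x.2 y.2) => [exy|nxy].
    case: (ldeg1P h1) => C [CF xC uC]; case: (ldeg1P h1y) => C' [C'F yC' uC'].
    move: hN2; rewrite -(DP_asg sF C'F yC' uC') -exy (DP_asg sF CF xC uC) hN.
    by move/setP/(_ N2); rewrite !inE eqxx => /eqP.
  have l1 : ldeg (asg x F) y <= 1 by rewrite -h1y ldeg_asg // eq_sym.
  have l2 : ldeg (asg y F) x <= 1 by rewrite -h1 ldeg_asg.
  case: (le1_step sx l1) => c1 s12 k1.
  case: (le1_step sy l2) => c2 _ _.
  rewrite -asg_comm // in c2.
  case: (IH (asg y (asg x F))) => // [|N3 hN3]; first by apply: (leq_trans k1); rewrite -ltnS; exact: leq_trans cx hn.
  have i1 := subsetP (conn_sDP c1) _ (in_sDP1 hN3).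
  have i2 := subsetP (conn_sDP c2) _ (in_sDP1 hN3).
  by move: i1 i2; rewrite hN hN2 !inE => /eqP -> /eqP.
exists N; apply/setP => H; apply/idP/idP.
  move=> hH; rewrite inE; move: hH; rewrite /sDP inE => /and3P [/connect_dec [eFH|[G [st cGH]]] nsH muH].
    by move: nsF; rewrite eFH nsH.
  case: (step_inv st sF) => y [h1y eG]; subst G.
  have : H \in sDP (asg y F) by rewrite /sDP inE cGH nsH muH.
  by rewrite K // inE.
rewrite inE => /eqP ->; apply: (subsetP (conn_sDP (connect1 stx))).
by rewrite hN inE.
Qed.

End S.

Theorem theorem23 (V : finType) (F : clauseset V) :
  saturated F -> #|sDP F| = 1.
Proof.
move=> sF; case: (main (leqnn #|F|) sF) => N ->; exact: cards1.
Qed.
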